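(* Let $n\ge1$ and let $c\in\mathfrak{S}_{n+1}$ be a Coxeter element. For every $\boldsymbol\pi=(\pi^k)_{1\le k\le n}\in\mathcal{ST}(c)$ and every $1\le k\le n$, \[\ell(\pi^k)\leqslant\min\bigl(\#\{i\in\mathbf L_c\cup\{1\}:i\leqslant k\},\ \#\{j\in\mathbf R_c\cup\{n+1\}:j>k\}\bigr).\]
   Context: $\ell(\pi)$ is the number of nonzero parts of a partition $\pi$. Coxeter element of $\mathfrak{S}_{n+1}$: product of $s_1,\dots,s_n$ ($s_i=(i,i+1)$), each exactly once; it is a long cycle $(c_1=1<c_2<\dots<c_m=n+1>c_{m+1}>\dots>c_{n+1})$, with $\mathbf L_c=\{c_2,\dots,c_{m-1}\}$, $\mathbf R_c=\{c_{m+1},\dots,c_{n+1}\}$. Storability: a pair of partitions $(\lambda,\mu)$ (padded with zeros) is storable if $\lambda_i\ge\mu_i\ge\lambda_{i+1}$ for all $i\ge1$. A triple $(\lambda,\mu,\nu)$ is $(\boxplus,\boxplus)$-storable if $(\lambda,\mu)$ and $(\nu,\mu)$ are storable; $(\boxplus,\boxminus)$-storable if $(\lambda,\mu)$ and $(\mu,\nu)$ are; $(\boxminus,\boxplus)$-storable if $(\mu,\lambda)$ and $(\nu,\mu)$ are; $(\boxminus,\boxminus)$-storable if $(\mu,\lambda)$ and $(\mu,\nu)$ are. For $\boldsymbol\pi=(\pi^1,\dots,\pi^n)$ set $\pi^0=\pi^{n+1}=(0)$; $\boldsymbol\pi$ is $X$-storable at $i$ if $(\pi^{i-1},\pi^i,\pi^{i+1})$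 is $X$-storable. With $\mathbf L=\mathbf L_c\cup\{1\}$, $\mathbf R=\mathbf R_c\cup\{n+1\}$ and $\mathbf R[-1]=\{r-1:r\in\mathbf R\}$, $\boldsymbol\pi\in\mathcal{ST}(c)$ ($c$-storable) means that for each $i\in\{1,\dots,n\}$: $(\boxplus,\boxplus)$-storable at $i$ if $i\notin\mathbf L\cup\mathbf R[-1]$; $(\boxplus,\boxminus)$-storable at $i$ if $i\in\mathbf R[-1]\setminus\mathbf L$; $(\boxminus,\boxplus)$-storable at $i$ if $i\in\mathbf L\setminus\mathbf R[-1]$; $(\boxminus,\boxminus)$-storable at $i$ if $i\in\mathbf L\cap\mathbf R[-1]$; and $\pi^k=(0)$ for $k\notin\{\min\mathbf L,\dots,\max\mathbf R\}$. *)

(* Defs.v *)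
From mathcomp Require Import all_boot all_order all_fingroup.
Set Implicit Arguments. Unset Strict Implicit. Unset Printing Implicit Defensive.

(* Points 1..n+1 of S_{n+1} are encoded as ordinals 0..n of 'I_(n.+1):
   the value v (1 <= v <= n+1) is the ordinal inord v.-1. *)

Local Open Scope group_scope.

Definition simple_tr (n i : nat) : 'S_(n.+1) :=
  tperm (inord i.-1 : 'I_(n.+1)) (inord i).

Definition coxeter_element (n : nat) (c : 'S_(n.+1)) : Prop :=
  exists w : seq nat, perm_eq w (iota 1 n) /\ c = \prod_(i <- w) simple_tr n i.

(* c is the long cycle (1 = c_1 < ... < c_m = n+1 > c_{m+1} > ... > c_{n+1});
   c_{j+1} = c^j(1).  L_c = {c_2,...,c_{m-1}}: the points v in 2..n visited by
   the orbit of 1 before n+1;  R_c = {c_{m+1},...}: those visited after n+1. *)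
Definition in_Lc (n : nat) (c : 'S_(n.+1)) (v : nat) : bool :=
  [&& 2 <= v, v <= n &
   [exists k : 'I_(n.+1), ((c ^+ k) ord0 == inord v.-1) &&
      [forall j : 'I_(n.+1), (j <= k)%N ==> ((c ^+ j) ord0 != ord_max)]]].

Definition in_Rc (n : nat) (c : 'S_(n.+1)) (v : nat) : bool :=
  [&& 2 <= v, v <= n &
   [exists k : 'I_(n.+1), ((c ^+ k) ord0 == inord v.-1) &&
      [exists j : 'I_(n.+1), (j < k)%N && ((c ^+ j) ord0 == ord_max)]]].

Local Close Scope group_scope.

Definition in_L (n : nat) (c : 'S_(n.+1)) (v : nat) : bool := (v == 1%N) || in_Lc c v.
Definition in_R (n : nat) (c : 'S_(n.+1)) (v : nat) : bool := (v == n.+1) || in_Rc c v.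
Definition in_Rm1 (n : nat) (c : 'S_(n.+1)) (i : nat) : bool := in_R c i.+1.

(* Partitions: weakly decreasing sequences of nats, padded with zeros via nth 0
   (part i of the paper, i >= 1, is nth 0 p i.-1). *)
Definition is_partition (p : seq nat) : bool := sorted geq p.
Definition plen (p : seq nat) : nat := count (fun x => 0 < x) p.
Definition part (p : seq nat) (i : nat) : nat := nth 0 p i.

Definition storable (lam mu : seq nat) : Prop :=
  forall i : nat, part mu i <= part lam i /\ part lam i.+1 <= part mu i.

Definition st_pp (l m r : seq nat) := storable l m /\ storable r m.
Definition st_pm (l m r : seq nat) := storable l m /\ storable m r.
Definition st_mp (l m r : seq nat) := storable m l /\ storable r m.
Definition st_mm (l m r : seq nat) := storable m l /\ storable m r.

Definition ext_fam (n : nat) (pi : nat -> seq nat) (k : nat) : seq nat :=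
  if (1 <= k <= n) then pi k else [::].

Definition c_storable (n : nat) (c : 'S_(n.+1)) (pi : nat -> seq nat) : Prop :=
  (forall k, 1 <= k <= n -> is_partition (pi k)) /\
  forall i, 1 <= i <= n ->
    let l := ext_fam n pi i.-1 in
    let m := ext_fam n pi i in
    let r := ext_fam n pi i.+1 in
    match in_L c i, in_Rm1 c i with
    | false, false => st_pp l m r
    | false, true  => st_pm l m r
    | true,  false => st_mp l m r
    | true,  true  => st_mm l m r
    end.

(* Main.v *)
Require Import Defs.
From mathcomp Require Import all_boot all_order all_fingroup.

Lemma plen_iota (p : seq nat) N : size p <= N ->
  plen p = count (fun i => 0 < part p i) (iota 0 N).
Proof.
move=> hN; rewrite /plen -{1}(mkseq_nth 0 p) /mkseq count_map.
rewrite -(subnKC hN) iotaD count_cat add0n.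
have -> : count (fun i => 0 < part p i) (iota (size p) (N - size p)) = 0.
  apply/eqP; rewrite -leqn0 leqNgt -has_count; apply/hasPn => i.
  by rewrite mem_iota => /andP [hi _]; rewrite /part nth_default.
by rewrite addn0.
Qed.

Lemma plen_le1 lam mu : (forall i, part mu i <= part lam i) -> plen mu <= plen lam.
Proof.
move=> h; rewrite (@plen_iota mu (size mu + size lam)) ?leq_addr //.
rewrite (@plen_iota lam (size mu + size lam)) ?leq_addl //.
apply: sub_count => i /=; move: (h i) => hi hm; exact: leq_trans hm hi.
Qed.

Lemma plen_le2 lam mu : (forall i, part lam i.+1 <= part mu i) -> plen lam <= (plen mu).+1.
Proof.
move=> h; set N := size mu + size lam.
rewrite (@plen_iota lam N.+1); last by apply: leqW; rewrite leq_addl.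
rewrite (@plen_iota mu N) ?leq_addr //.
have e : iota 1 N = map (addn 1) (iota 0 N) by rewrite -iotaDl.
rewrite /= e count_map -[(count _ _).+1]add1n; apply: leq_add; first by case: (0 < _).
apply: sub_count => i /= hm; exact: leq_trans hm (h i).
Qed.

Lemma st_le1 lam mu : storable lam mu -> plen mu <= plen lam.
Proof. by move=> h; apply: plen_le1 => i; case: (h i). Qed.

Lemma st_le2 lam mu : storable lam mu -> plen lam <= (plen mu).+1.
Proof. by move=> h; apply: plen_le2 => i; case: (h i). Qed.

Arguments st_le1 {lam mu}.
Arguments st_le2 {lam mu}.

Theorem proposition4p10 (n : nat) (c : 'S_(n.+1)) (pi : nat -> seq nat) :
  1 <= n -> coxeter_element c -> c_storable c pi ->
  forall k, 1 <= k <= n ->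
    plen (pi k) <= minn (count (in_L c) (iota 1 k))
                        (count (in_R c) (iota k.+1 (n.+1 - k))).
Proof.
move=> _ _ [_ hst] k /andP [k1 kn].
set a := fun j => plen (ext_fam n pi j).
have hL : forall j, j <= n -> a j <= count (in_L c) (iota 1 j).
  elim=> [|j IH] hj; first by rewrite /a /ext_fam.
  move: (hst j.+1 hj) => /= Hs.
  change (a j.+1 <= count (in_L c) (iota 1 j.+1)); move: Hs.
  have e : iota 1 j.+1 = iota 1 j ++ [:: j.+1] by rewrite -{1}[j.+1]addn1 iotaD add1n.
  rewrite e count_cat /= addn0.
  have IH' := IH (ltnW hj).
  case: (in_L c j.+1); case: (in_Rm1 c j.+1) => -[H _];
    rewrite /a /= in IH' *.
  - by rewrite addn1 (leq_trans (st_le2 H)) // ltnS.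
  - by rewrite addn1 (leq_trans (st_le2 H)) // ltnS.
  - by rewrite addn0 (leq_trans (st_le1 H)).
  - by rewrite addn0 (leq_trans (st_le1 H)).
have hR : forall d j, 1 <= j -> j + d = n.+1 ->
    a j <= count (in_R c) (iota j.+1 d).
  elim=> [|d IH] j j1 hjd.
    by rewrite addn0 in hjd; rewrite /a /ext_fam hjd ltnn andbF.
  have jn : j <= n by rewrite -ltnS -hjd addnS ltnS leq_addr.
  have hjj : 0 < j <= n by rewrite j1 jn.
  have hd : j.+1 + d = n.+1 by rewrite addSnnS.
  have IH' := IH j.+1 isT hd.
  move: (hst j hjj) => /= Hs.
  rewrite /=; move: Hs.
  case: (in_L c j); rewrite /in_Rm1; case: (in_R c j.+1) => -[_ H];
    rewrite /a /= in IH' *.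
  - by rewrite add1n (leq_trans (st_le2 H)) // ltnS.
  - by rewrite add0n (leq_trans (st_le1 H)).
  - by rewrite add1n (leq_trans (st_le2 H)) // ltnS.
  - by rewrite add0n (leq_trans (st_le1 H)).
have ek : ext_fam n pi k = pi k by rewrite /ext_fam k1 kn.
rewrite leq_min; apply/andP; split.
  by have := hL k kn; rewrite /a ek.
have := hR (n.+1 - k) k k1 (subnKC (leqW kn)); by rewrite /a ek.
Qed.
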